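(* Let $(\mu_i,\mathcal{S}_i,L_i,\pi_i)_{i=1}^n$ be irreducible, reversible continuous-time finite Markov chains, $p_1,\dots,p_n>0$ with $\sum_ip_i\le1$, and $(\mu,\mathcal{S},L,\pi)$ the product chain. With $\varrho_l,\rho_l,\psi_l,\varphi_l,j(c),\tilde j(c)$ as defined in the context, \[\varrho_{j(c)}\le\rho_{\tilde j(c)}\le\varrho_{j(e^c-1)}\quad\text{for all }c>0,\] with the conventions $\min\emptyset=\infty$ (and the corresponding eigenvalue $=\infty$).
   Context: Product chain: $\mathcal{S}=\prod_{i=1}^n\mathcal{S}_i$, $\mu=\prod_i\mu_i$, $\pi=\prod_i\pi_i$, $L=\sum_{i=1}^np_iI_1\otimes\cdots\otimes I_{i-1}\otimes L_i\otimes I_{i+1}\otimes\cdots\otimes I_n$. Let $0=\lambda_{i,0}\le\lambda_{i,1}\le\dots\le\lambda_{i,|\mathcal{S}_i|-1}$ be the eigenvalues of $-L_i$ with $L^2(\pi_i)$-orthonormal right eigenvectors $\phi_{i,0}=\mathbf1,\phi_{i,1},\dots$. Let $\Gamma=\{J=(j_1,\dots,j_n):0\le j_i<|\mathcal{S}_i|\}$, and for $J\in\Gamma$ set $\lambda_J=\sum_ip_i\lambda_{i,j_i}$, $\phi_J=\prod_i\phi_{i,j_i}$ (tensor product), and $\mu(\phi_J)=\prod_i\mu_i(\phi_{i,j_i})$ where $\mu_i(\phi)=\sum_x\mu_i(x)\phi(x)$. Enumerate $\{\lambda_J:J\in\Gamma,J\ne\mathbf0\}$ as $\varrho_1\le\varrho_2\le\cdots$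 with $\psi_l$ the corresponding $\mu(\phi_J)$; enumerate $\{p_i\lambda_{i,j}:1\le j<|\mathcal{S}_i|,1\le i\le n\}$ as $\rho_1\le\rho_2\le\cdots$ with $\varphi_l$ the corresponding $\mu_i(\phi_{i,j})$. For $c>0$: $j(c)=\min\{j\ge1:\sum_{l=1}^j\psi_l^2>c\}$ and $\tilde j(c)=\min\{j\ge1:\sum_{l=1}^j\varphi_l^2>c\}$. *)

(* Defs.v *)
From Stdlib Require Import Reals Lra.
Open Scope R_scope.

Fixpoint sumR (f : nat -> R) (k : nat) : R :=
  match k with O => 0 | S k' => sumR f k' + f k' end.

Fixpoint prodR (f : nat -> R) (k : nat) : R :=
  match k with O => 1 | S k' => prodR f k' * f k' end.

Fixpoint psum (g : nat -> R) (j : nat) : R :=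
  match j with O => 0 | S j' => psum g j' + g (S j') end.

Fixpoint first_from (P : nat -> bool) (k fuel : nat) : option nat :=
  match fuel with
  | O => None
  | S f => if P k then Some k else first_from P (S k) f
  end.

(* jmin g c N = min { j in 1..N : g 1 + ... + g j > c }, None if empty
   (beyond N there are no further terms, so the sums are constant). *)
Definition jmin (g : nat -> R) (c : R) (N : nat) : option nat :=
  first_from (fun j => if Rlt_dec c (psum g j) then true else false) 1 N.

(* The eigenvalue at index jmin, with the convention "= infinity" (None)
   when the minimum is over the empty set. *)
Definition eig_at (ev : nat -> R) (j : option nat) : option R :=
  match j with Some l => Some (ev l) | None => None end.

(* order on R ∪ {+infinity} (None = +infinity) *)
Definition le_ext (a b : option R) : Prop :=
  match a, b with
  | _, None => True
  | None, Some _ => False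
  | Some x, Some y => x <= y
  end.

(* ---------- Finite continuous-time Markov chains ----------
   A chain with state space {0,...,m-1} is given by its generator
   L : nat -> nat -> R (only entries x,y < m matter). *)

Definition is_generator (m : nat) (L : nat -> nat -> R) : Prop :=
  (forall x y, (x < m)%nat -> (y < m)%nat -> x <> y -> 0 <= L x y) /\
  (forall x, (x < m)%nat -> sumR (fun y => L x y) m = 0).

Definition is_distribution (m : nat) (q : nat -> R) : Prop :=
  (forall x, (x < m)%nat -> 0 <= q x) /\ sumR q m = 1.

Inductive reach (m : nat) (L : nat -> nat -> R) : nat -> nat -> Prop :=
  | reach_refl x : reach m L x x
  | reach_step x y z : (y < m)%nat -> L x y > 0 -> reach m L y z -> reach m L x z.

Definition irreducible (m : nat) (L : nat -> nat -> R) : Prop :=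
  forall x y, (x < m)%nat -> (y < m)%nat -> reach m L x y.

Definition reversible (m : nat) (L : nat -> nat -> R) (pi : nat -> R) : Prop :=
  forall x y, (x < m)%nat -> (y < m)%nat -> pi x * L x y = pi y * L y x.

Definition eigen_decomp (m : nat) (L : nat -> nat -> R) (pi : nat -> R)
    (lam : nat -> R) (phi : nat -> nat -> R) : Prop :=
  lam 0%nat = 0 /\
  (forall j k, (j <= k)%nat -> (k < m)%nat -> lam j <= lam k) /\
  (forall x, (x < m)%nat -> phi 0%nat x = 1) /\
  (forall j x, (j < m)%nat -> (x < m)%nat ->
      sumR (fun y => L x y * phi j y) m = - (lam j * phi j x)) /\
  (forall j k, (j < m)%nat -> (k < m)%nat ->
      sumR (fun x => pi x * phi j x * phi k x) m = if Nat.eq_dec j k then 1 else 0).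

Definition meas (m : nat) (mu : nat -> R) (f : nat -> R) : R :=
  sumR (fun x => mu x * f x) m.

(* ---------- Product chain spectral data ----------
   Chain i (i < n) has state space size msz i; a multi-index J : nat -> nat
   is in Gamma iff J i < msz i for all i < n (values at i >= n are irrelevant). *)

Definition in_Gamma (n : nat) (msz : nat -> nat) (J : nat -> nat) : Prop :=
  forall i, (i < n)%nat -> (J i < msz i)%nat.

Definition nonzero_idx (n : nat) (J : nat -> nat) : Prop :=
  exists i, (i < n)%nat /\ J i <> 0%nat.

Definition same_idx (n : nat) (J J' : nat -> nat) : Prop :=
  forall i, (i < n)%nat -> J i = J' i.

Definition lamJ (n : nat) (p : nat -> R) (lam : nat -> nat -> R) (J : nat -> nat) : R :=
  sumR (fun i => p i * lam i (J i)) n.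

Definition muphiJ (n : nat) (msz : nat -> nat) (mu : nat -> nat -> R)
    (phi : nat -> nat -> nat -> R) (J : nat -> nat) : R :=
  prodR (fun i => meas (msz i) (mu i) (phi i (J i))) n.

Definition enum_prod (n : nat) (msz : nat -> nat) (p : nat -> R)
    (lam : nat -> nat -> R) (N : nat) (e : nat -> nat -> nat) : Prop :=
  (forall l, (1 <= l <= N)%nat -> in_Gamma n msz (e l) /\ nonzero_idx n (e l)) /\
  (forall l l', (1 <= l <= N)%nat -> (1 <= l' <= N)%nat ->
      same_idx n (e l) (e l') -> l = l') /\
  (forall J, in_Gamma n msz J -> nonzero_idx n J ->
      exists l, (1 <= l <= N)%nat /\ same_idx n (e l) J) /\
  (forall l l', (1 <= l <= l')%nat -> (l' <= N)%nat ->
      lamJ n p lam (e l) <= lamJ n p lam (e l')).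

Definition enum_single (n : nat) (msz : nat -> nat) (p : nat -> R)
    (lam : nat -> nat -> R) (K : nat) (f : nat -> nat * nat) : Prop :=
  (forall l, (1 <= l <= K)%nat ->
      (fst (f l) < n)%nat /\ (1 <= snd (f l) < msz (fst (f l)))%nat) /\
  (forall l l', (1 <= l <= K)%nat -> (1 <= l' <= K)%nat -> f l = f l' -> l = l') /\
  (forall i j, (i < n)%nat -> (1 <= j < msz i)%nat ->
      exists l, (1 <= l <= K)%nat /\ f l = (i, j)) /\
  (forall l l', (1 <= l <= l')%nat -> (l' <= K)%nat ->
      p (fst (f l)) * lam (fst (f l)) (snd (f l)) <=
      p (fst (f l')) * lam (fst (f l')) (snd (f l'))).

(* Main.v *)
Require Import Defs.
From Stdlib Require Import Reals Lra Lia List ClassicalEpsilon FinFun.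
Import ListNotations.
Open Scope R_scope.

Fixpoint sumL (l : list R) : R := match l with [] => 0 | x :: r => x + sumL r end.

Lemma sumL_app l1 l2 : sumL (l1 ++ l2) = sumL l1 + sumL l2.
Proof. induction l1; simpl; [lra| rewrite IHl1; lra]. Qed.

Lemma sumR_ext f g m : (forall x, (x < m)%nat -> f x = g x) -> sumR f m = sumR g m.
Proof. induction m; simpl; intros H; auto. rewrite IHm by (intros; apply H; lia). rewrite H by lia. reflexivity. Qed.

Lemma prodR_ext f g m : (forall x, (x < m)%nat -> f x = g x) -> prodR f m = prodR g m.
Proof. induction m; simpl; intros H; auto. rewrite IHm by (intros; apply H; lia). rewrite H by lia. reflexivity. Qed.

Lemma sumR_nonneg f m : (forall x, (x<m)%nat -> 0 <= f x) -> 0 <= sumR f m.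
Proof. induction m; simpl; intros H; [lra|]. pose proof (H m ltac:(lia)). pose proof (IHm ltac:(intros; apply H; lia)). lra. Qed.

Lemma prodR_nonneg f m : (forall x, (x<m)%nat -> 0 <= f x) -> 0 <= prodR f m.
Proof. induction m; simpl; intros H; [lra|]. apply Rmult_le_pos; [apply IHm; intros; apply H; lia| apply H; lia]. Qed.

Lemma sumR_ge_term g m i : (forall x, (x<m)%nat -> 0 <= g x) -> (i < m)%nat -> g i <= sumR g m.
Proof. induction m; simpl; intros H Hi; [lia|].
 destruct (Nat.eq_dec i m). subst. pose proof (sumR_nonneg g m ltac:(intros; apply H; lia)). lra.
 pose proof (IHm ltac:(intros; apply H; lia) ltac:(lia)). pose proof (H m ltac:(lia)). lra. Qed.

Lemma sumR_zero g m : (forall x, (x<m)%nat -> g x = 0) -> sumR g m = 0.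
Proof. induction m; simpl; intros H; auto. rewrite IHm by (intros; apply H; lia). rewrite H by lia. lra. Qed.

Lemma prodR_one g m : (forall x, (x<m)%nat -> g x = 1) -> prodR g m = 1.
Proof. induction m; simpl; intros H; auto. rewrite IHm by (intros; apply H; lia). rewrite H by lia. lra. Qed.

Lemma sumR_single g m i0 : (i0 < m)%nat -> (forall i, (i<m)%nat -> i <> i0 -> g i = 0) -> sumR g m = g i0.
Proof. induction m; simpl; intros Hi H; [lia|].
 destruct (Nat.eq_dec i0 m). subst. rewrite sumR_zero by (intros; apply H; lia). lra.
 rewrite IHm by (intros; try apply H; lia). rewrite (H m) by lia. lra. Qed.

Lemma prodR_single g m i0 : (i0 < m)%nat -> (forall i, (i<m)%nat -> i <> i0 -> g i = 1) -> prodR g m = g i0.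
Proof. induction m; simpl; intros Hi H; [lia|].
 destruct (Nat.eq_dec i0 m). subst. rewrite prodR_one by (intros; apply H; lia). lra.
 rewrite IHm by (intros; try apply H; lia). rewrite (H m) by lia. lra. Qed.

Lemma prodR_sq g m : prodR g m ^ 2 = prodR (fun i => g i ^ 2) m.
Proof. induction m; cbn [prodR]; [lra|]. rewrite <- IHm. ring. Qed.

Lemma sumR_front g m : sumR g (S m) = g 0%nat + sumR (fun j => g (S j)) m.
Proof. induction m. simpl; lra. change (sumR g (S (S m))) with (sumR g (S m) + g (S m)). rewrite IHm. simpl. lra. Qed.

Lemma sumR_scal C g m : sumR (fun x => C * g x) m = C * sumR g m.
Proof. induction m; simpl; [lra|]. rewrite IHm. lra. Qed.

Lemma sumL_map_scal {A} (h : A -> R) S l : sumL (map (fun x => h x * S) l) = sumL (map h l) * S.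
Proof. induction l; simpl; [lra|]. rewrite IHl. lra. Qed.

Lemma sumL_flat_map {A B} (F : B -> R) (g : A -> list B) l :
  sumL (map F (flat_map g l)) = sumL (map (fun a => sumL (map F (g a))) l).
Proof. induction l; simpl; auto. rewrite map_app, sumL_app, IHl. reflexivity. Qed.

Lemma sumR_seq f m k : sumL (map f (seq k m)) = sumR (fun x => f (k + x)%nat) m.
Proof. induction m; [simpl; auto|]. cbn [sumR]. rewrite seq_S, map_app, sumL_app, IHm. simpl. lra. Qed.

Lemma sumR_nth {A} (G : A -> R) (l : list A) d :
  sumR (fun x => G (nth x l d)) (length l) = sumL (map G l).
Proof.
 induction l as [|a l IH] using rev_ind; simpl; auto.
 rewrite length_app. simpl. rewrite Nat.add_1_r. simpl.
 rewrite map_app, sumL_app. simpl.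
 rewrite (sumR_ext _ (fun x => G (nth x l d))) by (intros; rewrite app_nth1 by lia; reflexivity).
 rewrite IH. rewrite nth_middle. lra.
Qed.

Lemma psum_seq g m : psum g m = sumL (map g (seq 1 m)).
Proof. rewrite sumR_seq. induction m; simpl; auto. rewrite IHm. reflexivity. Qed.

Lemma psum_sumR g m : psum g m = sumR (fun x => g (S x)) m.
Proof. induction m; simpl; auto. rewrite IHm. reflexivity. Qed.

Lemma psum_ext f g m : (forall l, (1 <= l <= m)%nat -> f l = g l) -> psum f m = psum g m.
Proof. induction m; simpl; intros H; auto. rewrite IHm by (intros; apply H; lia). rewrite H by lia. reflexivity. Qed.

Lemma psum_le f g m : (forall l, (1 <= l <= m)%nat -> f l <= g l) -> psum f m <= psum g m.
Proof. induction m; simpl; intros H; [lra|]. pose proof (IHm ltac:(intros; apply H; lia)). pose proof (H (S m) ltac:(lia)). lra. Qed.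

Lemma psum_mono f a m : (forall l, (1 <= l)%nat -> 0 <= f l) -> (a <= m)%nat -> psum f a <= psum f m.
Proof. intros H. induction m; intros Ha. replace a with 0%nat by lia. lra.
 destruct (Nat.eq_dec a (S m)). subst; lra. simpl. pose proof (IHm ltac:(lia)). pose proof (H (S m) ltac:(lia)). lra. Qed.

Lemma psum_tail_zero f a m : (a <= m)%nat -> (forall l, (a < l <= m)%nat -> f l = 0) -> psum f m = psum f a.
Proof. induction m; intros Ha H. replace a with 0%nat by lia. reflexivity.
 destruct (Nat.eq_dec a (S m)). subst; reflexivity. simpl. rewrite IHm by (try intros; try apply H; lia). rewrite H by lia. lra. Qed.

Lemma sumR_upd v b s : (s < b)%nat ->
  sumR v b = sumR (fun x => if Nat.eq_dec x s then 0 else v x) b + v s.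
Proof.
 induction b; intros Hs; [lia|]. simpl.
 destruct (Nat.eq_dec s b).
 - subst. rewrite (sumR_ext (fun x => if Nat.eq_dec x b then 0 else v x) v b). destruct (Nat.eq_dec b b); [lra|congruence].
   intros x Hx. destruct (Nat.eq_dec x b); [lia|reflexivity].
 - rewrite IHb by lia. destruct (Nat.eq_dec b s); [lia|]. lra.
Qed.

Lemma INJ {A} (src : list A) (u : A -> R) (sg : A -> nat) : forall (v : nat -> R) b,
  NoDup src ->
  (forall a a', In a src -> In a' src -> sg a = sg a' -> a = a') ->
  (forall a, In a src -> (sg a < b)%nat /\ u a <= v (sg a)) ->
  (forall x, (x < b)%nat -> 0 <= v x) ->
  sumL (map u src) <= sumR v b.
Proof.
induction src as [|a r IH]; intros v b Hnd Hinj Hm Hv; simpl.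
- apply sumR_nonneg; auto.
- inversion Hnd; subst. destruct (Hm a (or_introl eq_refl)) as [Hb Hu].
  rewrite (sumR_upd v b (sg a) Hb).
  assert (sumL (map u r) <= sumR (fun x => if Nat.eq_dec x (sg a) then 0 else v x) b).
  { apply IH; auto.
    - intros; apply Hinj; simpl; auto.
    - intros a' Ha'. destruct (Hm a' (or_intror Ha')) as [Hb1 Hb2]. split; auto.
      destruct (Nat.eq_dec (sg a') (sg a)) as [E|E].
      + exfalso. assert (a' = a) by (apply Hinj; simpl; auto). subst; contradiction.
      + exact Hb2.
    - intros x Hx. destruct (Nat.eq_dec x (sg a)); [lra| auto]. }
  lra.
Qed.

Lemma NoDup_flat_map_disj {A B} (g : A -> list B) l :
  NoDup l -> (forall a, In a l -> NoDup (g a)) ->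
  (forall a a' b, In a l -> In a' l -> In b (g a) -> In b (g a') -> a = a') ->
  NoDup (flat_map g l).
Proof.
 induction l as [|a l IH]; simpl; intros Hn Hg Hd. constructor.
 inversion Hn; subst. apply NoDup_app.
 apply Hg; left; auto.
 apply IH; auto. intros a0 a' b H1' H2' H3 H4. apply (Hd a0 a' b); auto.
 intros b Hb Hb'. apply in_flat_map in Hb' as [a' [Ha' Hb']].
 assert (a = a') by (apply (Hd a a' b); auto). subst. contradiction.
Qed.

Lemma prod_le_exp s n : (forall i, (i < n)%nat -> 0 <= s i) ->
  prodR (fun i => 1 + s i) n <= exp (sumR s n).
Proof.
 induction n; intros H; simpl. rewrite exp_0; lra.
 rewrite exp_plus. apply Rmult_le_compat.
 apply prodR_nonneg; intros; pose proof (H x ltac:(lia)); lra.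
 pose proof (H n ltac:(lia)); lra.
 apply IHn; intros; apply H; lia. apply exp_ineq1_le.
Qed.

Lemma ff_some P : forall fuel k j, first_from P k fuel = Some j ->
  (k <= j < k + fuel)%nat /\ P j = true /\ forall i, (k <= i < j)%nat -> P i = false.
Proof.
 induction fuel; intros k j H; simpl in H. discriminate.
 destruct (P k) eqn:E. inversion H; subst. split; [lia|split; auto]. intros; lia.
 apply IHfuel in H as [H1 [H2 H3]]. split; [lia| split; auto]. intros i Hi.
 destruct (Nat.eq_dec i k); [subst; auto| apply H3; lia].
Qed.

Lemma ff_none P : forall fuel k, first_from P k fuel = None -> forall i, (k <= i < k+fuel)%nat -> P i = false.
Proof.
 induction fuel; intros k H i Hi; simpl in H. lia.
 destruct (P k) eqn:E. discriminate.
 destruct (Nat.eq_dec i k); [subst; auto| apply (IHfuel (S k)); auto; lia].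
Qed.

Definition ind (v : nat -> R) (lm : R) (g : nat -> R) (l : nat) : R :=
  if Rle_dec (v l) lm then g l else 0.

Lemma G1 (g v : nat -> R) (c lm : R) N :
  0 <= c ->
  (forall l, (1 <= l)%nat -> 0 <= g l) ->
  (forall l l', (1 <= l <= l')%nat -> (l' <= N)%nat -> v l <= v l') ->
  c < psum (ind v lm g) N ->
  exists j, jmin g c N = Some j /\ v j <= lm.
Proof.
intros Hc Hg Hv Hs. unfold jmin.
assert (Hle : forall m, psum (ind v lm g) m <= psum g m).
{ intros m; apply psum_le; intros; unfold ind; destruct Rle_dec; [lra| apply Hg; lia]. }
destruct (first_from _ 1 N) as [j|] eqn:E.
- apply ff_some in E as [Hj [HP Hmin]]. exists j; split; auto.
  destruct (Rle_dec (v j) lm) as [|Hlt]; auto. exfalso.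
  assert (psum (ind v lm g) N = psum (ind v lm g) (j-1)).
  { apply psum_tail_zero. lia. intros l Hl. unfold ind. destruct (Rle_dec (v l) lm); auto.
    assert (v j <= v l) by (apply Hv; lia). lra. }
  assert (psum g (j-1) <= c).
  { destruct (Nat.eq_dec j 1). subst; simpl; lra.
    specialize (Hmin (j-1)%nat ltac:(lia)). cbv beta in Hmin.
    destruct (Rlt_dec c (psum g (j-1))); [discriminate|lra]. }
  specialize (Hle (j-1)%nat). lra.
- exfalso. specialize (Hle N).
  destruct N. simpl in Hs; lra.
  pose proof (ff_none _ _ _ E (S N) ltac:(lia)) as HP. cbv beta in HP.
  destruct (Rlt_dec c (psum g (S N))); [discriminate|lra].
Qed.

Definition updJ (J : nat -> nat) (k j : nat) : nat -> nat := fun i => if Nat.eq_dec i k then j else J i.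
Fixpoint box (msz : nat -> nat) (k : nat) : list (nat -> nat) :=
  match k with O => [fun _ => 0%nat]
  | S k' => flat_map (fun J => map (updJ J k') (seq 0 (msz k'))) (box msz k') end.

Lemma box_sum msz (w : nat -> nat -> R) k :
  sumL (map (fun J => prodR (fun i => w i (J i)) k) (box msz k)) = prodR (fun i => sumR (w i) (msz i)) k.
Proof.
 induction k; simpl. lra.
 rewrite sumL_flat_map.
 rewrite (map_ext_in _ (fun J => prodR (fun i => w i (J i)) k * sumR (w k) (msz k))).
 rewrite sumL_map_scal, IHk. reflexivity.
 intros J _. rewrite map_map. simpl.
 rewrite (map_ext _ (fun j => prodR (fun i => w i (J i)) k * w k j)).
 rewrite sumR_seq. simpl. apply sumR_scal.
 intros j. f_equal. apply prodR_ext. intros x Hx. unfold updJ. destruct Nat.eq_dec; [lia|reflexivity].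
 unfold updJ. destruct Nat.eq_dec; [reflexivity|congruence].
Qed.

Lemma box_in msz k J : in_Gamma k msz J -> exists J', In J' (box msz k) /\ same_idx k J' J.
Proof.
 revert J. induction k; intros J HJ.
 - exists (fun _ => 0%nat). split. left; reflexivity. intros i Hi; lia.
 - destruct (IHk J) as [J' [HJ' Hs]]. intros i Hi; apply HJ; lia.
   exists (updJ J' k (J k)). split.
   + simpl. apply in_flat_map. exists J'. split; auto. apply in_map. apply in_seq. specialize (HJ k ltac:(lia)). lia.
   + intros i Hi. unfold updJ. destruct Nat.eq_dec. subst; reflexivity. apply Hs; lia.
Qed.

Theorem lemmaB1
  (n : nat) (msz : nat -> nat)
  (L : nat -> nat -> nat -> R) (mu pi : nat -> nat -> R) (p : nat -> R)
  (lam : nat -> nat -> R) (phi : nat -> nat -> nat -> R)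
  (N : nat) (e : nat -> nat -> nat) (K : nat) (f : nat -> nat * nat) :
  (forall i, (i < n)%nat -> (1 <= msz i)%nat) ->
  (forall i, (i < n)%nat -> is_generator (msz i) (L i)) ->
  (forall i, (i < n)%nat -> irreducible (msz i) (L i)) ->
  (forall i, (i < n)%nat -> is_distribution (msz i) (pi i)) ->
  (forall i, (i < n)%nat -> reversible (msz i) (L i) (pi i)) ->
  (forall i, (i < n)%nat -> is_distribution (msz i) (mu i)) ->
  (forall i, (i < n)%nat -> 0 < p i) ->
  sumR p n <= 1 ->
  (forall i, (i < n)%nat -> eigen_decomp (msz i) (L i) (pi i) (lam i) (phi i)) ->
  enum_prod n msz p lam N e ->
  enum_single n msz p lam K f ->
  let varrho := fun l => lamJ n p lam (e l) in
  let psi := fun l => muphiJ n msz mu phi (e l) in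
  let rho := fun l => p (fst (f l)) * lam (fst (f l)) (snd (f l)) in
  let varphi := fun l => meas (msz (fst (f l))) (mu (fst (f l))) (phi (fst (f l)) (snd (f l))) in
  forall c : R, 0 < c ->
    le_ext (eig_at varrho (jmin (fun l => psi l ^ 2) c N))
           (eig_at rho (jmin (fun l => varphi l ^ 2) c K)) /\
    le_ext (eig_at rho (jmin (fun l => varphi l ^ 2) c K))
           (eig_at varrho (jmin (fun l => psi l ^ 2) (exp c - 1) N)).
Proof.
intros Hm1 _ _ _ _ Hmu Hp _ Heig Hep Hes varrho psi rho varphi c Hc.
destruct Hep as [Ep1 [Ep2 [Ep3 Ep4]]].
destruct Hes as [Es1 [Es2 [Es3 Es4]]].
set (a := fun i j => meas (msz i) (mu i) (phi i j)).
assert (Ha0 : forall i, (i < n)%nat -> a i 0%nat = 1).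
{ intros i Hi. unfold a, meas. destruct (Heig i Hi) as [_ [_ [H3 _]]].
  destruct (Hmu i Hi) as [_ Hs]. rewrite <- Hs. apply sumR_ext. intros x Hx. rewrite H3 by auto. lra. }
assert (Hlam0 : forall i, (i<n)%nat -> lam i 0%nat = 0) by (intros i Hi; apply (Heig i Hi)).
assert (Hlamnn : forall i j, (i<n)%nat -> (j < msz i)%nat -> 0 <= lam i j).
{ intros i j Hi Hj. destruct (Heig i Hi) as [H1 [H2 _]]. rewrite <- H1. apply H2; lia. }
assert (HlamJ : forall J i, in_Gamma n msz J -> (i < n)%nat -> p i * lam i (J i) <= lamJ n p lam J).
{ intros J i HJ Hi. unfold lamJ. apply (sumR_ge_term (fun i => p i * lam i (J i))); auto.
  intros x Hx. apply Rmult_le_pos; [left; apply Hp; auto| apply Hlamnn; auto]. }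
assert (HlamJext : forall J J', same_idx n J J' -> lamJ n p lam J = lamJ n p lam J').
{ intros J J' H. unfold lamJ. apply sumR_ext. intros x Hx. rewrite H; auto. }
assert (HmuJext : forall J J', same_idx n J J' -> muphiJ n msz mu phi J = muphiJ n msz mu phi J').
{ intros J J' H. unfold muphiJ. apply prodR_ext. intros x Hx. rewrite H; auto. }
set (g1 := fun l => psi l ^ 2). set (g2 := fun l => varphi l ^ 2).
assert (Hg1 : forall l, (1<=l)%nat -> 0 <= g1 l) by (intros; apply pow2_ge_0).
assert (Hg2 : forall l, (1<=l)%nat -> 0 <= g2 l) by (intros; apply pow2_ge_0).
assert (Hind_nn : forall v lm g, (forall l, (1 <= l)%nat -> 0 <= g l) -> forall l, (1<=l)%nat -> 0 <= ind v lm g l).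
{ intros v lm g Hg l Hl. unfold ind. destruct Rle_dec; [apply Hg; auto|lra]. }
assert (KA : forall lm, psum (ind rho lm g2) K <= psum (ind varrho lm g1) N).
{ intros lm.
  set (single := fun l => fun i => if Nat.eq_dec i (fst (f l)) then snd (f l) else 0%nat).
  assert (Hsg : forall l, (1 <= l <= K)%nat -> in_Gamma n msz (single l) /\ nonzero_idx n (single l)).
  { intros l Hl. destruct (Es1 l Hl) as [Hi Hj]. split.
    - intros i Hi'. unfold single. destruct Nat.eq_dec. subst; lia. specialize (Hm1 i Hi'); lia.
    - exists (fst (f l)). split; auto. unfold single. destruct Nat.eq_dec; [lia|congruence]. }
  set (sig := fun J => epsilon (inhabits 0%nat) (fun l => (1<=l<=N)%nat /\ same_idx n (e l) J)).
  assert (Hsig : forall l, (1 <= l <= K)%nat -> (1 <= sig (single l) <= N)%nat /\ same_idx n (e (sig (single l))) (single l)).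
  { intros l Hl. destruct (Hsg l Hl) as [G Z]. unfold sig. apply epsilon_spec. apply Ep3; auto. }
  assert (Hrho : forall l, (1<=l<=K)%nat -> lamJ n p lam (single l) = rho l).
  { intros l Hl. destruct (Es1 l Hl) as [Hi Hj]. unfold lamJ.
    rewrite (sumR_single _ n (fst (f l)) Hi).
    - unfold single. destruct Nat.eq_dec; [reflexivity|congruence].
    - intros i Hi' Hne. unfold single. destruct Nat.eq_dec; [congruence|]. rewrite Hlam0 by auto. ring. }
  assert (Hphi : forall l, (1<=l<=K)%nat -> muphiJ n msz mu phi (single l) = varphi l).
  { intros l Hl. destruct (Es1 l Hl) as [Hi Hj]. unfold muphiJ.
    rewrite (prodR_single _ n (fst (f l)) Hi).
    - unfold single. destruct Nat.eq_dec; [reflexivity|congruence].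
    - intros i Hi' Hne. unfold single. destruct Nat.eq_dec; [congruence|]. apply (Ha0 i Hi'). }
  rewrite psum_seq, psum_sumR.
  apply (INJ (seq 1 K) (ind rho lm g2) (fun l => (sig (single l) - 1)%nat) (fun x => ind varrho lm g1 (S x)) N).
  - apply seq_NoDup.
  - intros l l' Hl Hl' E. apply in_seq in Hl, Hl'.
    destruct (Hsig l ltac:(lia)) as [B1 S1]. destruct (Hsig l' ltac:(lia)) as [B2 S2].
    assert (E': sig (single l) = sig (single l')) by lia.
    assert (Hss : same_idx n (single l) (single l')).
    { intros i Hi. rewrite <- S1, <- S2 by auto. rewrite E'. reflexivity. }
    destruct (Es1 l ltac:(lia)) as [Hi1 Hj1].
    specialize (Hss (fst (f l)) Hi1). unfold single in Hss.
    destruct (Nat.eq_dec (fst (f l)) (fst (f l))) as [_|]; [|congruence].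
    destruct (Nat.eq_dec (fst (f l)) (fst (f l'))) as [E2|E2]; [|lia].
    apply Es2; try lia. destruct (f l), (f l'); simpl in *; congruence.
  - intros l Hl. apply in_seq in Hl. destruct (Hsig l ltac:(lia)) as [B1 S1]. split; [lia|].
    replace (S (sig (single l) - 1)) with (sig (single l)) by lia.
    assert (V1 : varrho (sig (single l)) = rho l).
    { rewrite <- Hrho by lia. apply HlamJext; auto. }
    assert (V2 : psi (sig (single l)) = varphi l).
    { rewrite <- Hphi by lia. apply HmuJext; auto. }
    unfold ind, g1, g2. rewrite V1, V2. right; reflexivity.
  - intros x Hx. apply Hind_nn; auto. lia. }
assert (KB : forall lm, psum (ind varrho lm g1) N + 1 <= exp (psum (ind rho lm g2) K)).
{ intros lm.
  set (w := fun i j => if Nat.eq_dec j 0 then 1 else if Rle_dec (p i * lam i j) lm then a i j ^ 2 else 0).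
  assert (Hw : forall i j, 0 <= w i j).
  { intros; unfold w; destruct Nat.eq_dec; [lra|destruct Rle_dec; [apply pow2_ge_0|lra]]. }
  set (s := fun i => sumR (fun j => w i (S j)) (msz i - 1)).
  assert (S1 : psum (ind varrho lm g1) N + 1 <= prodR (fun i => sumR (w i) (msz i)) n).
  { set (Bx := box msz n). set (d := fun _ : nat => 0%nat).
    set (v := fun x => prodR (fun i => w i (nth x Bx d i)) n).
    assert (Hv : forall x, 0 <= v x) by (intros; apply prodR_nonneg; intros; apply Hw).
    assert (Hpos : forall J, in_Gamma n msz J -> exists x, (x < length Bx)%nat /\ same_idx n (nth x Bx d) J).
    { intros J HJ. destruct (box_in msz n J HJ) as [J' [HI Hs]].
      destruct (In_nth _ _ d HI) as [x [Hx E]]. exists x. split; auto. intros i Hi. rewrite <- (Hs i Hi). unfold Bx. rewrite E. reflexivity. }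
    destruct (Hpos (fun _ => 0%nat)) as [z [Hz Zs]]. { intros i Hi; specialize (Hm1 i Hi); lia. }
    set (pos := fun l => epsilon (inhabits 0%nat) (fun x => (x < length Bx)%nat /\ same_idx n (nth x Bx d) (e l))).
    assert (Hposs : forall l, (1<=l<=N)%nat -> (pos l < length Bx)%nat /\ same_idx n (nth (pos l) Bx d) (e l)).
    { intros l Hl. unfold pos. apply epsilon_spec. apply Hpos. apply Ep1; auto. }
    assert (Hvz : v z = 1).
    { unfold v. apply prodR_one. intros i Hi. rewrite Zs by auto. unfold w. destruct Nat.eq_dec; [reflexivity|congruence]. }
    assert (Hbs : sumR v (length Bx) = prodR (fun i => sumR (w i) (msz i)) n).
    { unfold v. rewrite (sumR_nth (fun J => prodR (fun i => w i (J i)) n) Bx d). apply box_sum. }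
    rewrite <- Hbs, (sumR_upd v _ z Hz), Hvz.
    apply Rplus_le_compat_r.
    rewrite psum_seq.
    apply (INJ (seq 1 N) (ind varrho lm g1) pos).
    - apply seq_NoDup.
    - intros l l' Hl Hl' E. apply in_seq in Hl, Hl'. apply Ep2; try lia.
      intros i Hi. destruct (Hposs l ltac:(lia)) as [_ A1]. destruct (Hposs l' ltac:(lia)) as [_ A2].
      rewrite <- A1, <- A2 by auto. rewrite E; reflexivity.
    - intros l Hl. apply in_seq in Hl. destruct (Hposs l ltac:(lia)) as [P1 P2]. split; auto.
      destruct (Nat.eq_dec (pos l) z) as [Ez|Ez].
      + exfalso. destruct (Ep1 l ltac:(lia)) as [HG [i [Hi Hnz]]]. apply Hnz.
        rewrite <- P2 by auto. rewrite Ez, Zs by auto. reflexivity.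
      + unfold ind. destruct (Rle_dec (varrho l) lm) as [Hle|]; [|apply Hv].
        unfold v. rewrite (prodR_ext _ (fun i => w i (e l i))) by (intros i Hi; rewrite P2 by auto; reflexivity).
        unfold g1. change (psi l) with (prodR (fun i => a i (e l i)) n). rewrite prodR_sq. right. apply prodR_ext.
        intros i Hi. destruct (Ep1 l ltac:(lia)) as [HG _].
        unfold w. destruct (Nat.eq_dec (e l i) 0) as [E0|E0]. rewrite E0, Ha0 by auto. ring.
        destruct (Rle_dec (p i * lam i (e l i)) lm) as [|Hn]; [reflexivity| exfalso].
        apply Hn. pose proof (HlamJ (e l) i HG Hi). change (varrho l) with (lamJ n p lam (e l)) in Hle. lra.
    - intros x Hx. destruct Nat.eq_dec; [lra|apply Hv]. }
  assert (S2 : prodR (fun i => sumR (w i) (msz i)) n = prodR (fun i => 1 + s i) n).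
  { apply prodR_ext. intros i Hi. specialize (Hm1 i Hi). replace (msz i) with (S (msz i - 1)) at 1 by lia.
    rewrite sumR_front. unfold s. f_equal. }
  assert (S3 : sumR s n <= psum (ind rho lm g2) K).
  { set (src := flat_map (fun i => map (fun j => (i, S j)) (seq 0 (msz i - 1))) (seq 0 n)).
    set (idx := fun q : nat*nat => epsilon (inhabits 0%nat) (fun l => (1<=l<=K)%nat /\ f l = q)).
    assert (Hsrc : forall q, In q src -> (fst q < n)%nat /\ (1 <= snd q < msz (fst q))%nat).
    { intros q Hq. apply in_flat_map in Hq as [i [Hi Hq]]. apply in_seq in Hi.
      apply in_map_iff in Hq as [j [E Hj]]. apply in_seq in Hj. subst q. simpl. lia. }
    assert (Hidx : forall q, In q src -> (1 <= idx q <= K)%nat /\ f (idx q) = q).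
    { intros q Hq. destruct (Hsrc q Hq). unfold idx. apply epsilon_spec. destruct q; simpl in *. apply Es3; auto. }
    assert (Hsum : sumL (map (fun q => w (fst q) (snd q)) src) = sumR s n).
    { unfold src. rewrite sumL_flat_map, sumR_seq. apply sumR_ext. intros i Hi. simpl.
      rewrite map_map, sumR_seq. simpl. reflexivity. }
    rewrite <- Hsum, psum_sumR.
    apply (INJ src _ (fun q => (idx q - 1)%nat)).
    - unfold src. apply NoDup_flat_map_disj. apply seq_NoDup.
      + intros i _. apply Injective_map_NoDup. intros j j' E. injection E; auto. apply seq_NoDup.
      + intros i i' q _ _ H1 H2. apply in_map_iff in H1 as [j [E1 _]]. apply in_map_iff in H2 as [j' [E2 _]].
        subst q. injection E2; auto.
    - intros q q' Hq Hq' E. destruct (Hidx q Hq) as [B1 F1]. destruct (Hidx q' Hq') as [B2 F2].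
      rewrite <- F1, <- F2. f_equal. lia.
    - intros q Hq. destruct (Hidx q Hq) as [B1 F1]. destruct (Hsrc q Hq) as [Q1 Q2]. split; [lia|].
      replace (S (idx q - 1)) with (idx q) by lia.
      unfold ind, g2. change (rho (idx q)) with (p (fst (f (idx q))) * lam (fst (f (idx q))) (snd (f (idx q)))).
      change (varphi (idx q)) with (a (fst (f (idx q))) (snd (f (idx q)))).
      rewrite F1. unfold w. destruct (Nat.eq_dec (snd q) 0); [lia|]. right; reflexivity.
    - intros x _. apply Hind_nn; auto. lia. }
  assert (S4 := prod_le_exp s n (fun i _ => sumR_nonneg _ _ (fun j _ => Hw i (S j)))).
  assert (S5 : exp (sumR s n) <= exp (psum (ind rho lm g2) K)).
  { destruct (Rle_lt_or_eq_dec _ _ S3) as [H|H]; [left; apply exp_increasing; auto| right; rewrite H; reflexivity]. }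
  lra. }
split.
- destruct (jmin g2 c K) as [t|] eqn:Ht; [|destruct (jmin g1 c N); exact I].
  pose proof Ht as Ht'. unfold jmin in Ht'. apply ff_some in Ht' as [Ht1 [HP _]]. cbv beta in HP.
  destruct (Rlt_dec c (psum g2 t)) as [Hct|]; [|discriminate].
  assert (C1 : c < psum (ind rho (rho t) g2) K).
  { assert (psum (ind rho (rho t) g2) t = psum g2 t).
    { apply psum_ext. intros l Hl. unfold ind. destruct Rle_dec as [|Hn]; auto. exfalso; apply Hn. apply Es4; lia. }
    pose proof (psum_mono (ind rho (rho t) g2) t K (Hind_nn _ _ _ Hg2) ltac:(lia)). lra. }
  pose proof (KA (rho t)) as KA1.
  destruct (G1 g1 varrho c (rho t) N ltac:(lra) Hg1 Ep4 ltac:(lra)) as [j [Hj Hv]].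
  rewrite Hj. simpl. exact Hv.
- destruct (jmin g1 (exp c - 1) N) as [k|] eqn:Hk; [|destruct (jmin g2 c K); exact I].
  pose proof Hk as Hk'. unfold jmin in Hk'. apply ff_some in Hk' as [Hk1 [HP _]]. cbv beta in HP.
  destruct (Rlt_dec (exp c - 1) (psum g1 k)) as [Hck|]; [|discriminate].
  assert (C1 : exp c - 1 < psum (ind varrho (varrho k) g1) N).
  { assert (psum (ind varrho (varrho k) g1) k = psum g1 k).
    { apply psum_ext. intros l Hl. unfold ind. destruct Rle_dec as [|Hn]; auto. exfalso; apply Hn. apply Ep4; lia. }
    pose proof (psum_mono (ind varrho (varrho k) g1) k N (Hind_nn _ _ _ Hg1) ltac:(lia)). lra. }
  pose proof (KB (varrho k)) as KB1.
  assert (C2 : c < psum (ind rho (varrho k) g2) K).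
  { destruct (Rlt_le_dec c (psum (ind rho (varrho k) g2) K)) as [|Hle]; auto. exfalso.
    assert (exp (psum (ind rho (varrho k) g2) K) <= exp c).
    { destruct (Rle_lt_or_eq_dec _ _ Hle) as [H|H]; [left; apply exp_increasing; auto| right; rewrite H; reflexivity]. }
    lra. }
  destruct (G1 g2 rho c (varrho k) K ltac:(lra) Hg2 Es4 C2) as [j [Hj Hv]].
  rewrite Hj. simpl. exact Hv.
Qed.
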